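(* Let $L>0$, $d\in\mathbb{N}$, let $I$ be a finite index set and $\mathcal{T}=\{(x_i,g_i,f_i)\}_{i\in I}$ with $x_i,g_i\in\mathbb{R}^d$, $f_i\in\mathbb{R}$. Let $C\subset\mathbb{R}^d$ be a closed convex set with $0\in C$. Define $w_{\mathcal{T}}:\mathbb{R}^d\times\mathbb{R}^d\times\mathbb{R}^I\to\mathbb{R}$ by \[ w_{\mathcal{T}}(y,\nu,\alpha)=\frac{L}{2}\Big\|y+\nu-\sum_{i\in I}\alpha_i\big(x_i-\tfrac1L g_i\big)\Big\|^2+\sum_{i\in I}\alpha_i\Big(f_i-\tfrac{1}{2L}\|g_i\|^2\Big), \] and $W^C_{\mathcal{T}}(y)=\min_{\nu\in C,\ \alpha\in\Delta_I} w_{\mathcal{T}}(y,\nu,\alpha)$, where $\Delta_I=\{\alpha\in\mathbb{R}^I:\sum_{i\in I}\alpha_i=1,\ \alpha_i\geq 0\ \forall i\}$. Then $W^C_{\mathcal{T}}$ is convex and belongs to $C^{1,1}_L$. Furthermore, for any $i\in I$ such that $P_C(-\frac1L g_i)=0$ and \[ \frac{1}{2L}\|g_i-g_j\|^2\leq f_j-f_i-\langle g_i,x_j-x_i\rangle\quad\text{for all } j\in I, \] we have $W^C_{\mathcal{T}}(x_i)=f_i$ and $\nabla W^C_{\mathcal{T}}(x_i)=g_i$.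
   Context: $P_C$ denotes the Euclidean projection onto $C$. $C^{1,1}_L$ denotes the class of differentiable functions on $\mathbb{R}^d$ whose gradient is Lipschitz continuous with constant $L$. *)

(* Defs.v *)
From HB Require Import structures.
From mathcomp Require Import all_boot all_order all_algebra.
From mathcomp Require Import all_classical all_reals all_analysis.
Set Implicit Arguments. Unset Strict Implicit. Unset Printing Implicit Defensive.
Import Order.TTheory GRing.Theory Num.Theory.
Import numFieldNormedType.Exports.
Local Open Scope classical_set_scope.
Local Open Scope ring_scope.

Definition dotv {R : realType} {d : nat} (u v : 'rV[R]_d) : R :=
  \sum_(k < d) u ord0 k * v ord0 k.
Definition enorm {R : realType} {d : nat} (u : 'rV[R]_d) : R :=
  Num.sqrt (dotv u u).

Definition convex_setE {R : realType} {d : nat} (C : set 'rV[R]_d) : Prop :=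
  forall x y t, C x -> C y -> 0 <= t <= 1 -> C (t *: x + (1 - t) *: y).
Definition convex_fun {R : realType} {d : nat} (F : 'rV[R]_d -> R) : Prop :=
  forall x y t, 0 <= t <= 1 ->
    F (t *: x + (1 - t) *: y) <= t * F x + (1 - t) * F y.

Definition has_gradient {R : realType} {d : nat} (F : 'rV[R]_d -> R)
  (x g : 'rV[R]_d) : Prop :=
  differentiable F x /\ forall h, 'd F x h = dotv g h.

Definition C11 {R : realType} {d : nat} (L : R) (F : 'rV[R]_d -> R) : Prop :=
  exists G : 'rV[R]_d -> 'rV[R]_d,
    (forall x, has_gradient F x (G x)) /\
    (forall x y, enorm (G x - G y) <= L * enorm (x - y)).

Definition is_proj {R : realType} {d : nat} (C : set 'rV[R]_d) (z p : 'rV[R]_d)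
  : Prop := C p /\ forall q, C q -> enorm (z - p) <= enorm (z - q).

Definition simplex {R : realType} {I : finType} : set (I -> R) :=
  [set a | \sum_(i : I) a i = 1 /\ forall i, 0 <= a i].

Definition w_T {R : realType} {d : nat} {I : finType} (L : R)
  (x g : I -> 'rV[R]_d) (f : I -> R) (y nu : 'rV[R]_d) (a : I -> R) : R :=
  L / 2 * enorm (y + nu - \sum_(i : I) a i *: (x i - L^-1 *: g i)) ^+ 2
  + \sum_(i : I) a i * (f i - (2 * L)^-1 * enorm (g i) ^+ 2).

Definition W_T {R : realType} {d : nat} {I : finType} (L : R)
  (x g : I -> 'rV[R]_d) (f : I -> R) (C : set 'rV[R]_d) (y : 'rV[R]_d) : R :=
  inf [set w_T L x g f y nu a | nu in C & a in simplex].

(* Main.v *)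
Require Import Defs.
From HB Require Import structures.
From mathcomp Require Import all_boot all_order all_algebra.
From mathcomp Require Import all_classical all_reals all_analysis.
From mathcomp Require Import ring lra.
Set Implicit Arguments. Unset Strict Implicit. Unset Printing Implicit Defensive.
Import Order.TTheory GRing.Theory Num.Theory.
Import numFieldNormedType.Exports.
Local Open Scope classical_set_scope.
Local Open Scope ring_scope.

Section Dot.
Context {R : realType} {d : nat}.
Implicit Types u v w : 'rV[R]_d.

Lemma dotvC u v : dotv u v = dotv v u.
Proof. by apply: eq_bigr => k _; rewrite mulrC. Qed.

Lemma dotvDl u v w : dotv (u + v) w = dotv u w + dotv v w.
Proof. by rewrite /dotv -big_split; apply: eq_bigr => k _; rewrite !mxE mulrDl. Qed.

Lemma dotvDr u v w : dotv w (u + v) = dotv w u + dotv w v.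
Proof. by rewrite dotvC dotvDl !(dotvC w). Qed.

Lemma dotvZl (a : R) u v : dotv (a *: u) v = a * dotv u v.
Proof. by rewrite /dotv mulr_sumr; apply: eq_bigr => k _; rewrite !mxE mulrA. Qed.

Lemma dotvZr (a : R) u v : dotv u (a *: v) = a * dotv u v.
Proof. by rewrite dotvC dotvZl dotvC. Qed.

Lemma dotvNl u v : dotv (- u) v = - dotv u v.
Proof. by rewrite -scaleN1r dotvZl mulN1r. Qed.

Lemma dotvNr u v : dotv u (- v) = - dotv u v.
Proof. by rewrite dotvC dotvNl dotvC. Qed.

Lemma dotvBl u v w : dotv (u - v) w = dotv u w - dotv v w.
Proof. by rewrite dotvDl dotvNl. Qed.

Lemma dotvBr u v w : dotv w (u - v) = dotv w u - dotv w v.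
Proof. by rewrite dotvDr dotvNr. Qed.

Lemma dotv0l v : dotv 0 v = 0.
Proof. by rewrite /dotv big1 // => k _; rewrite mxE mul0r. Qed.

Lemma dotv0r v : dotv v 0 = 0.
Proof. by rewrite dotvC dotv0l. Qed.

Lemma dotv_ge0 u : 0 <= dotv u u.
Proof. by apply: sumr_ge0 => k _; rewrite -expr2 sqr_ge0. Qed.

Lemma dotv_eq0 u : dotv u u = 0 -> u = 0.
Proof.
move=> /eqP; rewrite psumr_eq0; last by move=> k _; rewrite -expr2 sqr_ge0.
move=> /allP H; apply/rowP => k; rewrite mxE.
have := H k (mem_index_enum k); rewrite -expr2 sqrf_eq0 => /eqP.
by [].
Qed.

Lemma enorm2 u : enorm u ^+ 2 = dotv u u.
Proof. by rewrite /enorm sqr_sqrtr // dotv_ge0. Qed.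

Lemma dotv_sumr (I : finType) (F : I -> 'rV[R]_d) u :
  dotv u (\sum_i F i) = \sum_i dotv u (F i).
Proof.
rewrite /dotv exchange_big /=; apply: eq_bigr => k _.
by rewrite summxE mulr_sumr.
Qed.

End Dot.


Lemma small_le0 {R : realType} (z K : R) : 0 <= K ->
  (forall t, 0 < t <= 1 -> z <= K * t) -> z <= 0.
Proof.
move=> K0 H; rewrite leNgt; apply/negP => z0.
have hzK : 0 < z + K by lra.
have ht : 0 < z / (z + K) <= 1.
  apply/andP; split; first by rewrite divr_gt0.
  by rewrite ler_pdivrMr // mul1r; lra.
have := H _ ht.
have -> : K * (z / (z + K)) = z - z * z / (z + K) by field; lra.
have : 0 < z * z / (z + K) by rewrite divr_gt0 // mulr_gt0.
lra.
Qed.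

Lemma small_eq0 {R : realType} (z K : R) : 0 <= K ->
  (forall t, 0 < t <= 1 -> `|z| <= K * t) -> z = 0.
Proof.
move=> K0 H; apply/eqP; rewrite eq_le; apply/andP; split.
  by apply: (small_le0 K0) => t /H; rewrite ler_norml; lra.
rewrite -oppr_le0; apply: (small_le0 K0) => t /H; rewrite ler_norml; lra.
Qed.

Section Generic.
Context {R : realType} {d : nat}.
Variable F : 'rV[R]_d -> R.
Variable L : R.
Hypothesis L0 : 0 < L.
Hypothesis Hcvx : convex_fun F.
Hypothesis Hscv : forall a b t, 0 <= t <= 1 ->
  t * F a + (1 - t) * F b - L / 2 * (t * (1 - t)) * dotv (a - b) (a - b)
  <= F (t *: a + (1 - t) *: b).

Definition Qt x h t := (F (x + t *: h) - F x) / t.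
Let N (h : 'rV[R]_d) := dotv h h.

Lemma Q_mono x h s t : 0 < s -> s <= t -> Qt x h s <= Qt x h t.
Proof.
move=> s0 st; have t0 : 0 < t by apply: lt_le_trans s0 st.
set l := s / t.
have l01 : 0 <= l <= 1.
  by apply/andP; split; [rewrite divr_ge0 ?ltW | rewrite ler_pdivrMr // mul1r].
have := Hcvx (x + t *: h) x l01.
have -> : l *: (x + t *: h) + (1 - l) *: x = x + s *: h.
  by apply/rowP => k; rewrite !mxE /l; field; rewrite gt_eqF.
rewrite /Qt; set a := F (x + s *: h); set b := F (x + t *: h); set c := F x.
move=> H; rewrite -subr_ge0.
have -> : (b - c) / t - (a - c) / s = (l * b + (1 - l) * c - a) / s.
  by rewrite /l; field; rewrite !gt_eqF.
by apply: divr_ge0; [lra | apply: ltW].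
Qed.

Lemma Q_lower x h s t : 0 < s -> s <= t -> Qt x h t - L / 2 * t * N h <= Qt x h s.
Proof.
move=> s0 st; have t0 : 0 < t by apply: lt_le_trans s0 st.
set l := s / t.
have l01 : 0 <= l <= 1.
  by apply/andP; split; [rewrite divr_ge0 ?ltW | rewrite ler_pdivrMr // mul1r].
have := Hscv (x + t *: h) x l01.
have -> : l *: (x + t *: h) + (1 - l) *: x = x + s *: h.
  by apply/rowP => k; rewrite !mxE /l; field; rewrite gt_eqF.
have -> : x + t *: h - x = t *: h by rewrite addrC addKr.
rewrite dotvZl dotvZr -/(N h).
rewrite /Qt; set a := F (x + s *: h); set b := F (x + t *: h); set c := F x.
move=> H; rewrite -subr_ge0.
have -> : (a - c) / s - ((b - c) / t - L / 2 * t * N h) =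
   (a - (l * b + (1 - l) * c - L / 2 * (l * (1 - l)) * (t * (t * N h)))) / s
   + L / 2 * l * t * N h.
  by rewrite /l; field; rewrite !gt_eqF.
apply: addr_ge0; first by apply: divr_ge0; [lra | apply: ltW].
rewrite !mulr_ge0 ?dotv_ge0 ?ltW //; first (try by rewrite divr_gt0); idtac.
all: try by case/andP: l01.
all: try by rewrite divr_ge0 ?ltW.
all: try by rewrite divr_gt0.
all: by rewrite invr_gt0.
Qed.

Definition Dd x h := inf [set Qt x h t | t in [set t : R | 0 < t <= 1]].

Lemma Dd_has_inf x h : has_inf [set Qt x h t | t in [set t : R | 0 < t <= 1]].
Proof.
split; first by exists (Qt x h 1), 1 => //=; rewrite ltr01 lexx.
exists (Qt x h 1 - L / 2 * 1 * N h) => _ [t /andP[t0 t1] <-].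
exact: Q_lower.
Qed.

Lemma Dd_le x h t : 0 < t <= 1 -> Dd x h <= Qt x h t.
Proof.
move=> ht; apply: (ge_inf (proj2 (Dd_has_inf x h))).
by exists t.
Qed.

Lemma Dd_ge x h t : 0 < t <= 1 -> Qt x h t - L / 2 * t * N h <= Dd x h.
Proof.
move=> /andP[t0 t1]; apply: lb_le_inf; first by case: (Dd_has_inf x h).
move=> _ [s /andP[s0 s1] <-].
have [st|ts] := leP s t; first exact: Q_lower.
apply: le_trans (Q_mono _ _ t0 (ltW ts)).
rewrite gerBl !mulr_ge0 ?dotv_ge0 ?ltW //.
Qed.



Lemma half01 : 0 <= (2^-1 : R) <= 1.
Proof. apply/andP; split; first by rewrite invr_ge0 ler0n.
by rewrite invf_le1 // ?ler1n // ltr0n.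
Qed.

Lemma Q_add_ub x h1 h2 t : 0 < t ->
  Qt x h1 t + Qt x h2 t - Qt x (h1 + h2) t <= L / 4 * t * N (h1 - h2).
Proof.
move=> t0.
have H1 := Hscv (x + t *: h1) (x + t *: h2) half01.
have H2 := Hcvx (x + t *: (h1 + h2)) x half01.
have E : 2^-1 *: (x + t *: (h1 + h2)) + (1 - 2^-1) *: x =
  2^-1 *: (x + t *: h1) + (1 - 2^-1) *: (x + t *: h2).
  by apply/rowP => k; rewrite !mxE; field.
rewrite E in H2; clear E.
have E : x + t *: h1 - (x + t *: h2) = t *: (h1 - h2).
  by apply/rowP => k; rewrite !mxE; ring.
rewrite E in H1; clear E.
move: H1 H2; rewrite dotvZl dotvZr -/(N _) /Qt.
set m := F (_ + _ *: (x + t *: h2)).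
set a1 := F (x + t *: h1); set a2 := F (x + t *: h2);
set a := F (x + t *: (h1 + h2)); set c := F x => H1 H2.
rewrite -subr_ge0.
have -> : L / 4 * t * N (h1 - h2) - ((a1 - c) / t + (a2 - c) / t - (a - c) / t)
  = 2 / t * ((2^-1 * a + (1 - 2^-1) * c - m) + (m - (2^-1 * a1 + (1 - 2^-1) * a2
      - L / 2 * (2^-1 * (1 - 2^-1)) * (t * (t * N (h1 - h2)))))).
  by field; rewrite gt_eqF.
apply: mulr_ge0; first by rewrite divr_ge0 ?ler0n ?ltW.
lra.
Qed.

Lemma Q_add_lb x h1 h2 t : 0 < t ->
  Qt x (h1 + h2) t - Qt x h1 t - Qt x h2 t <= L / 4 * t * N (h1 + h2).
Proof.
move=> t0.
have H1 := Hcvx (x + t *: h1) (x + t *: h2) half01.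
have H2 := Hscv (x + t *: (h1 + h2)) x half01.
have E : 2^-1 *: (x + t *: (h1 + h2)) + (1 - 2^-1) *: x =
  2^-1 *: (x + t *: h1) + (1 - 2^-1) *: (x + t *: h2).
  by apply/rowP => k; rewrite !mxE; field.
rewrite E in H2; clear E.
have E : x + t *: (h1 + h2) - x = t *: (h1 + h2).
  by apply/rowP => k; rewrite !mxE; ring.
rewrite E in H2; clear E.
move: H1 H2; rewrite dotvZl dotvZr -/(N _) /Qt.
set m := F (_ + _ *: (x + t *: h2)).
set a1 := F (x + t *: h1); set a2 := F (x + t *: h2);
set a := F (x + t *: (h1 + h2)); set c := F x => H1 H2.
rewrite -subr_ge0.
have -> : L / 4 * t * N (h1 + h2) - ((a - c) / t - (a1 - c) / t - (a2 - c) / t)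
  = 2 / t * ((2^-1 * a1 + (1 - 2^-1) * a2 - m) + (m - (2^-1 * a + (1 - 2^-1) * c
      - L / 2 * (2^-1 * (1 - 2^-1)) * (t * (t * N (h1 + h2)))))).
  by field; rewrite gt_eqF.
apply: mulr_ge0; first by rewrite divr_ge0 ?ler0n ?ltW.
lra.
Qed.


Lemma N_ge0 h : 0 <= N h. Proof. exact: dotv_ge0. Qed.

Lemma Dd_add x h1 h2 : Dd x (h1 + h2) = Dd x h1 + Dd x h2.
Proof.
apply/eqP; rewrite -subr_eq0; apply/eqP.
pose K := L / 4 * N (h1 + h2) + L / 4 * N (h1 - h2)
  + L / 2 * (N h1 + N h2 + N (h1 + h2)).
apply: (@small_eq0 _ _ K).
  by rewrite /K !addr_ge0 ?mulr_ge0 ?N_ge0 ?divr_ge0 ?(ltW L0) ?addr_ge0 ?N_ge0.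
move=> t ht; have [t0 t1] := andP ht.
have := Dd_le x (h1 + h2) ht; have := Dd_le x h1 ht; have := Dd_le x h2 ht.
have := Dd_ge x (h1 + h2) ht; have := Dd_ge x h1 ht; have := Dd_ge x h2 ht.
have := Q_add_ub x h1 h2 t0; have := Q_add_lb x h1 h2 t0.
rewrite ler_norml /K; nra.
Qed.

Lemma Dd0 x : Dd x 0 = 0.
Proof.
have := Dd_add x 0 0; rewrite addr0; lra.
Qed.

Lemma Dd_pos x h c : 0 < c -> Dd x (c *: h) = c * Dd x h.
Proof.
move=> c0; apply/eqP; rewrite -subr_eq0; apply/eqP.
pose K := L / 2 * (c * c * N h) + c * (L / 2 * c * N h).
apply: (@small_eq0 _ _ K).
  by rewrite /K !addr_ge0 ?mulr_ge0 ?N_ge0 ?divr_ge0 ?(ltW L0) ?(ltW c0).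
move=> t /andP[t0 t1].
set u := t / (1 + c).
have u0 : 0 < u by rewrite divr_gt0 //; lra.
have ut : u <= t by rewrite ler_pdivrMr; nra.
have hu : 0 < u <= 1 by rewrite u0 /=; lra.
have cu0 : 0 < c * u by rewrite mulr_gt0.
have hcu : 0 < c * u <= 1.
  rewrite cu0 /= /u mulrA ler_pdivrMr; nra.
have EQ : Qt x (c *: h) u = c * Qt x h (c * u).
  by rewrite /Qt scalerA [u * c]mulrC; field; rewrite !gt_eqF.
have := Dd_le x (c *: h) hu; have := Dd_ge x (c *: h) hu.
have := Dd_le x h hcu; have := Dd_ge x h hcu.
rewrite EQ /N dotvZl dotvZr -/(N h) ler_norml /K.
move=> A B C D.
have NN := N_ge0 h.
have E1 : c * (Qt x h (c * u) - L / 2 * (c * u) * N h) <= c * Dd x h.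
  by rewrite ler_pM2l.
have E2 : c * Dd x h <= c * Qt x h (c * u).
  by rewrite ler_pM2l.
have P1 : L / 2 * u * (c * (c * N h)) <= L / 2 * (c * c * N h) * t.
  have : 0 <= L / 2 * (c * c * N h) by rewrite !mulr_ge0 // ?ltW // divr_ge0 ?ltW.
  nra.
have P2 : c * (L / 2 * (c * u) * N h) <= c * (L / 2 * c * N h) * t.
  have : 0 <= c * (L / 2 * c * N h) by rewrite !mulr_ge0 // ?ltW // divr_ge0 ?ltW.
  nra.
nra.
Qed.

Lemma Dd_opp x h : Dd x (- h) = - Dd x h.
Proof.
apply/eqP; rewrite -subr_eq0 opprK addrC -Dd_add addrN Dd0.
by [].
Qed.

Lemma Dd_scale x h c : Dd x (c *: h) = c * Dd x h.
Proof.
have [c0|c0|->] := ltrgtP c 0.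
- rewrite -[c]opprK scaleNr Dd_opp Dd_pos ?oppr_gt0 //.
  ring.
- exact: Dd_pos.
- by rewrite scale0r Dd0 mul0r.
Qed.

Definition Gr x : 'rV[R]_d := \row_k Dd x 'e_k.

Lemma dot_Gr x h : dotv (Gr x) h = Dd x h.
Proof.
rewrite [in RHS](row_sum_delta h).
rewrite (big_morph (Dd x) (Dd_add x) (Dd0 x)).
rewrite /dotv; apply: eq_bigr => k _.
by rewrite Dd_scale mxE mulrC.
Qed.

Lemma Gr_bound x h :
  0 <= F (x + h) - F x - dotv (Gr x) h <= L / 2 * dotv h h.
Proof.
have h1 : 0 < (1:R) <= 1 by rewrite ltr01 /=.
have := Dd_le x h h1; have := Dd_ge x h h1.
rewrite dot_Gr /Qt scale1r divr1 -/(N h).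
move=> A B; apply/andP; split; lra.
Qed.

End Generic.


Section Generic2.
Context {R : realType} {d : nat}.
Variable F : 'rV[R]_d -> R.
Variable L : R.
Hypothesis L0 : 0 < L.
Variable G : 'rV[R]_d -> 'rV[R]_d.
Hypothesis HB : forall x h,
  0 <= F (x + h) - F x - dotv (G x) h <= L / 2 * dotv h h.

Lemma G_lip x y : enorm (G x - G y) <= L * enorm (x - y).
Proof.
set v := G y - G x; set w := y - x; set s := L^-1.
have E1 : x + (w - s *: v) = y + - (s *: v).
  by apply/rowP => k; rewrite /w !mxE; ring.
have E2 : y + (- w + s *: v) = x + s *: v.
  by apply/rowP => k; rewrite /w !mxE; ring.
have bma : dotv (G y) v - dotv (G x) v = dotv v v by rewrite /v dotvBl.
have qmp : dotv (G y) w - dotv (G x) w = dotv v w by rewrite /v dotvBl.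
have vE : G x - G y = - v by rewrite /v opprB.
have wE : x - y = - w by rewrite /w opprB.
rewrite vE wE; clearbody v w.
have := HB x (w - s *: v); rewrite E1.
have := HB y (- (s *: v)).
have := HB y (- w + s *: v); rewrite E2.
have := HB x (s *: v).
rewrite !(dotvDr, dotvNr, dotvZr, dotvNl, dotvZl, dotvDl) !opprK.
set a := dotv (G x) v; set b := dotv (G y) v; set n := dotv v v.
set p := dotv (G x) w; set q := dotv (G y) w.
have Ls : L * s = 1 by rewrite /s divff // gt_eqF.
have sba : s * b - s * a = s * n by rewrite -mulrBr bma.
have ssn : L / 2 * (s * (s * n)) = s * n / 2.
  by rewrite /s; field; rewrite gt_eqF.
rewrite ssn.
move=> /andP[A1 A2] /andP[B1 B2] /andP[C1 C2] /andP[D1 D2].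
have key : s * n <= q - p by lra.
have key2 : n <= L * dotv v w.
  by rewrite -qmp -/q -/p; have := ler_wpM2l (ltW L0) key; rewrite mulrA Ls mul1r.
have key3 : n <= L ^+ 2 * dotv w w.
  have := dotv_ge0 (v - L *: w).
  rewrite !(dotvBl, dotvBr, dotvZl, dotvZr) (dotvC w v) -/n.
  nra.
rewrite /enorm !(dotvNl, dotvNr) !opprK -/n.
rewrite -(ger0_norm (ltW L0)) -sqrtr_sqr -sqrtrM ?sqr_ge0 //.
by rewrite ler_sqrt // mulr_ge0 ?sqr_ge0 ?dotv_ge0.
Qed.

Lemma coord_le_norm (h : 'rV[R]_d) k : `|h ord0 k| <= `|h|.
Proof.
rewrite (_ : `|h| = mx_norm h) // mx_normrE; apply/bigmax_geP; right => /=.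
by exists (ord0, k).
Qed.

Lemma dot_le_norm (h : 'rV[R]_d) : dotv h h <= d%:R * `|h| ^+ 2.
Proof.
rewrite /dotv; apply: le_trans (_ : \sum_(k < d) `|h| ^+ 2 <= _).
  apply: ler_sum => k _; rewrite -expr2 -real_normK ?num_real //.
  by rewrite lerXn2r ?nnegrE ?normr_ge0 // coord_le_norm.
by rewrite sumr_const card_ord mulr_natl.
Qed.

Lemma G_grad x : has_gradient F x (G x).
Proof.
set g := G x.
have glin : linear (dotv g : 'rV[R]_d -> R^o).
  by move=> a u v; rewrite dotvDr dotvZr.
pose gL : {linear 'rV[R]_d -> R^o} := HB.pack (dotv g : _ -> R^o) (GRing.isLinear.Build _ _ _ _ _ glin).
have gLE : (gL : _ -> _) = dotv g by [].
have cont : continuous gL.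
  apply/linear_bounded_continuous/linear_boundedP.
  pose r0 := \sum_(k < d) `|g ord0 k|.
  exists r0; split; first by rewrite num_real.
  move=> r hr h; rewrite gLE /dotv.
  apply: le_trans (ler_norm_sum _ _ _) _.
  apply: le_trans (_ : \sum_(k < d) `|g ord0 k| * `|h| <= _).
    apply: ler_sum => k _; rewrite normrM ler_wpM2l //.
    exact: coord_le_norm.
  rewrite -mulr_suml ler_wpM2r //; apply: ltW.
  exact: hr.
have lo : F \o shift x = cst (F x) + gL +o_ (0 : 'rV[R]_d) id.
  apply/eqaddoP => eps eps0.
  set M := L / 2 * d%:R.
  have M0 : 0 <= M by rewrite /M; apply: mulr_ge0; [apply: divr_ge0; [exact: ltW | exact: ler0n] | exact: ler0n].
  apply/(@nbhs_norm0P R [the pseudoMetricNormedZmodType R of 'rV[R]_d]); exists (eps / (M + 1)).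
    by rewrite /= divr_gt0 //; lra.
  move=> h /= hd.
  rewrite (_ : (_ - _) h = F (x + h) - F x - dotv g h); last first.
    change (F (h + x) - (F x + dotv g h) = F (x + h) - F x - dotv g h).
    by rewrite [h + x]addrC opprD addrA.
  have := HB x h; move=> /andP[B1 B2].
  rewrite ger0_norm; last by lra.
  have n0 := normr_ge0 h.
  have Nh := dot_le_norm h.
  have : L / 2 * dotv h h <= M * `|h| ^+ 2.
    apply: le_trans (_ : L / 2 * (d%:R * `|h| ^+ 2) <= _).
      by rewrite ler_wpM2l // divr_ge0 ?ler0n // ltW.
    by rewrite /M mulrA.
  have : M * `|h| ^+ 2 <= M * (eps / (M + 1)) * `|h|.
    by rewrite expr2 mulrA ler_wpM2r // ler_wpM2l // ltW.
  have : M * (eps / (M + 1)) <= eps.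
    rewrite mulrA ler_pdivrMr; last by lra.
    nra.
  have : 0 <= `|h| by [].
  nra.
have dE := diff_unique cont lo.
split; last by move=> h; rewrite dE.
by apply/diff_locallyP; rewrite dE; split.
Qed.

End Generic2.


Lemma dot_comb {R : realType} {d : nat} (t : R) (u v : 'rV[R]_d) :
  dotv (t *: u + (1 - t) *: v) (t *: u + (1 - t) *: v) =
  t * dotv u u + (1 - t) * dotv v v - t * (1 - t) * dotv (u - v) (u - v).
Proof.
rewrite !(dotvDl, dotvDr, dotvZl, dotvZr, dotvNl, dotvNr) (dotvC v u).
ring.
Qed.

Section WT.
Context {R : realType} {d : nat} {I : finType}.
Variables (L : R) (x g : I -> 'rV[R]_d) (f : I -> R) (C : set 'rV[R]_d).
Hypothesis L0 : 0 < L.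
Hypothesis I0 : (0 < #|I|)%N.
Hypothesis Cconv : convex_setE C.
Hypothesis C0 : C 0.

Let w := w_T L x g f.
Let W := W_T L x g f C.
Let S y := [set w y nu a | nu in C & a in simplex].

Definition Z (a : I -> R) := \sum_i a i *: (x i - L^-1 *: g i).
Definition cc (a : I -> R) := \sum_i a i * (f i - (2 * L)^-1 * enorm (g i) ^+ 2).

Lemma wE y nu a : w y nu a = L / 2 * dotv (y + nu - Z a) (y + nu - Z a) + cc a.
Proof. by rewrite /w /w_T enorm2. Qed.

Definition ei (i0 : I) : I -> R := fun i => (i == i0)%:R.

Lemma ei_simplex i0 : simplex (ei i0).
Proof.
split; last by move=> i; rewrite /ei ler0n.
rewrite (bigD1 i0) //= /ei eqxx big1 ?addr0 // => i /negbTE -> //.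
Qed.

Lemma S_ne y : S y !=set0.
Proof.
have [i0 _] : exists i0 : I, i0 \in I by apply/card_gt0P.
by exists (w y 0 (ei i0)), 0 => //; exists (ei i0) => //; apply: ei_simplex.
Qed.

Lemma S_lb y : has_lbound (S y).
Proof.
set c := fun i => f i - (2 * L)^-1 * enorm (g i) ^+ 2.
exists (- \sum_i `|c i|) => _ [nu Cnu [a [sa ap] <-]].
rewrite wE; apply: le_trans (_ : cc a <= _); last first.
  by rewrite lerDr mulr_ge0 ?dotv_ge0 // divr_ge0 ?ler0n // ltW.
apply: le_trans (_ : \sum_i a i * (- \sum_j `|c j|) <= _).
  by rewrite -mulr_suml sa mul1r.
apply: ler_sum => i _; rewrite ler_wpM2l //.
rewrite lerNl; apply: le_trans (_ : `|c i| <= _); first by rewrite -normrN ler_norm.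
by rewrite (bigD1 i) //= lerDl sumr_ge0.
Qed.

Lemma S_inf y : has_inf (S y).
Proof. by split; [apply: S_ne | apply: S_lb]. Qed.

Lemma W_le y nu a : C nu -> simplex a -> W y <= w y nu a.
Proof. by move=> Cnu sa; apply: (ge_inf (S_lb y)); exists nu => //; exists a. Qed.

Lemma W_ge y m : (forall nu a, C nu -> simplex a -> m <= w y nu a) -> m <= W y.
Proof.
move=> H; apply: lb_le_inf; first exact: S_ne.
by move=> _ [nu Cnu [a sa <-]]; apply: H.
Qed.


Definition acomb (t : R) (a1 a2 : I -> R) := fun i => t * a1 i + (1 - t) * a2 i.

Lemma Z_comb t a1 a2 : Z (acomb t a1 a2) = t *: Z a1 + (1 - t) *: Z a2.
Proof.
rewrite /Z !scaler_sumr -big_split; apply: eq_bigr => i _.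
by rewrite /acomb scalerDl !scalerA.
Qed.

Lemma cc_comb t a1 a2 : cc (acomb t a1 a2) = t * cc a1 + (1 - t) * cc a2.
Proof.
rewrite /cc !mulr_sumr -big_split; apply: eq_bigr => i _.
by rewrite /acomb mulrDl !mulrA.
Qed.

Lemma simplex_comb t a1 a2 : 0 <= t <= 1 -> simplex a1 -> simplex a2 ->
  simplex (acomb t a1 a2).
Proof.
move=> /andP[t0 t1] [s1 p1] [s2 p2]; split.
  by rewrite /acomb big_split /= -!mulr_sumr s1 s2 !mulr1 addrC subrK.
by move=> i; rewrite /acomb addr_ge0 // mulr_ge0 // ?p1 ?p2 // subr_ge0.
Qed.

Lemma W_convex : convex_fun W.
Proof.
move=> y1 y2 t ht; have [t0 t1] := andP ht.
apply/ler_addgt0Pr => e e0.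
have [_ [nu1 C1 [a1 sa1 <-]] lt1] := inf_adherent e0 (S_inf y1).
have [_ [nu2 C2 [a2 sa2 <-]] lt2] := inf_adherent e0 (S_inf y2).
have := W_le (t *: y1 + (1 - t) *: y2) (Cconv C1 C2 ht) (simplex_comb ht sa1 sa2).
rewrite !wE Z_comb cc_comb.
have -> : t *: y1 + (1 - t) *: y2 + (t *: nu1 + (1 - t) *: nu2)
   - (t *: Z a1 + (1 - t) *: Z a2) =
   t *: (y1 + nu1 - Z a1) + (1 - t) *: (y2 + nu2 - Z a2).
  by apply/rowP => k; rewrite !mxE; ring.
rewrite dot_comb.
move: lt1 lt2; rewrite !wE -/(W y1) -/(W y2).
set N1 := dotv (y1 + nu1 - Z a1) _; set N2 := dotv (y2 + nu2 - Z a2) _.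
set N3 := dotv (_ - _) _.
have N30 : 0 <= N3 by apply: dotv_ge0.
move=> lt1 lt2 H.
have t10 : 0 <= 1 - t by lra.
have A1 := ler_wpM2l t0 (ltW lt1).
have A2 := ler_wpM2l t10 (ltW lt2).
have A3 : 0 <= L / 2 * (t * (1 - t) * N3).
  apply: mulr_ge0; first by apply: divr_ge0; [exact: ltW | exact: ler0n].
  by rewrite !mulr_ge0.
apply: le_trans H _.
nra.
Qed.


Lemma W_scv a b t : 0 <= t <= 1 ->
  t * W a + (1 - t) * W b - L / 2 * (t * (1 - t)) * dotv (a - b) (a - b)
  <= W (t *: a + (1 - t) *: b).
Proof.
move=> ht; have [t0 t1] := andP ht; apply: W_ge => nu al Cnu sal.
have Ha := W_le a Cnu sal; have Hb := W_le b Cnu sal.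
rewrite !wE in Ha Hb *.
have -> : t *: a + (1 - t) *: b + nu - Z al =
   t *: (a + nu - Z al) + (1 - t) *: (b + nu - Z al).
  by apply/rowP => k; rewrite !mxE; ring.
rewrite dot_comb.
have -> : a + nu - Z al - (b + nu - Z al) = a - b.
  by apply/rowP => k; rewrite !mxE; ring.
move: Ha Hb.
set N1 := dotv (a + nu - Z al) _; set N2 := dotv (b + nu - Z al) _.
set N3 := dotv (a - b) _.
move=> Ha Hb.
have t10 : 0 <= 1 - t by lra.
have A1 := ler_wpM2l t0 Ha.
have A2 := ler_wpM2l t10 Hb.
nra.
Qed.


Lemma Z_ei i : Z (ei i) = x i - L^-1 *: g i.
Proof.
rewrite /Z (bigD1 i) //= /ei eqxx scale1r big1 ?addr0 // => j /negbTE ->.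
by rewrite scale0r.
Qed.

Lemma cc_ei i : cc (ei i) = f i - (2 * L)^-1 * enorm (g i) ^+ 2.
Proof.
rewrite /cc (bigD1 i) //= /ei eqxx mul1r big1 ?addr0 // => j /negbTE ->.
by rewrite mul0r.
Qed.

Lemma W_up i h : W (x i + h) <= f i + dotv (g i) h + L / 2 * dotv h h.
Proof.
have := W_le (x i + h) C0 (ei_simplex i); rewrite wE Z_ei cc_ei enorm2 addr0.
have -> : x i + h - (x i - L^-1 *: g i) = h + L^-1 *: g i.
  by apply/rowP => k; rewrite !mxE; ring.
rewrite !(dotvDl, dotvDr, dotvZl, dotvZr) (dotvC (g i) h).
move=> H; apply: (le_trans H); rewrite le_eqVlt; apply/orP; left; apply/eqP.
by field; rewrite gt_eqF.
Qed.


Lemma proj_ineq i nu : is_proj C (- (L^-1 *: g i)) 0 -> C nu -> 0 <= dotv (g i) nu.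
Proof.
move=> [_ Hp] Cnu.
set q := - (L^-1 *: g i).
have key : forall t, 0 < t <= 1 -> 2 * dotv q nu <= dotv nu nu * t.
  move=> t /andP[t0 t1].
  have ht : 0 <= t <= 1 by rewrite ltW.
  have Ct := Cconv Cnu C0 ht.
  rewrite scaler0 addr0 in Ct.
  have := Hp _ Ct; rewrite subr0 => H.
  have : enorm q ^+ 2 <= enorm (q - t *: nu) ^+ 2.
    by rewrite lerXn2r // nnegrE sqrtr_ge0.
  rewrite !enorm2 !(dotvDl, dotvDr, dotvNl, dotvNr, dotvZl, dotvZr) ?(dotvC nu (g i)).
  move=> H2.
  have : t * (2 * dotv q nu) <= t * (dotv nu nu * t) by rewrite /q dotvNl dotvZl; nra.
  by rewrite (ler_pM2l t0) /q dotvNl dotvZl.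
have := small_le0 (dotv_ge0 nu) key.
rewrite /q dotvNl dotvZl.
have s0 : 0 < L^-1 by rewrite invr_gt0.
nra.
Qed.


Lemma W_low i : is_proj C (- (L^-1 *: g i)) 0 ->
  (forall j : I, (2 * L)^-1 * enorm (g i - g j) ^+ 2
                    <= f j - f i - dotv (g i) (x j - x i)) ->
  f i <= W (x i).
Proof.
move=> Hp Hint; apply: W_ge => nu a Cnu [sa pa].
have Pnu := proj_ineq Hp Cnu.
rewrite wE.
set s := L^-1; set k := (2 * L)^-1.
pose X := \sum_j a j *: x j; pose Gs := \sum_j a j *: g j.
pose A := \sum_j a j * f j; pose B := \sum_j a j * dotv (g j) (g j).
have ZE : Z a = X - s *: Gs.
  rewrite /Z /X /Gs scaler_sumr -sumrB; apply: eq_bigr => j _.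
  by rewrite scalerBr !scalerA mulrC.
have ccE : cc a = A - k * B.
  rewrite /cc /A /B mulr_sumr -sumrB; apply: eq_bigr => j _.
  by rewrite enorm2 mulrBr mulrCA.
have HS : 0 <= \sum_j a j * (f j - f i - dotv (g i) (x j - x i)
                   - k * dotv (g i - g j) (g i - g j)).
  apply: sumr_ge0 => j _; apply: mulr_ge0 => //.
  by rewrite subr_ge0 -enorm2.
have SE : \sum_j a j * (f j - f i - dotv (g i) (x j - x i)
                   - k * dotv (g i - g j) (g i - g j)) =
   A - f i - (dotv (g i) X - dotv (g i) (x i))
   - k * (dotv (g i) (g i) - 2 * dotv (g i) Gs + B).
  have E1 : \sum_j a j * f i = f i by rewrite -mulr_suml sa mul1r.
  have E2 : \sum_j a j * dotv (g i) (x i) = dotv (g i) (x i)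
    by rewrite -mulr_suml sa mul1r.
  have E3 : \sum_j a j * dotv (g i) (g i) = dotv (g i) (g i)
    by rewrite -mulr_suml sa mul1r.
  have E4 : dotv (g i) X = \sum_j a j * dotv (g i) (x j).
    by rewrite /X dotv_sumr; apply: eq_bigr => j _; rewrite dotvZr.
  have E5 : dotv (g i) Gs = \sum_j a j * dotv (g i) (g j).
    by rewrite /Gs dotv_sumr; apply: eq_bigr => j _; rewrite dotvZr.
  rewrite (eq_bigr (fun j => a j * f j - a j * f i - a j * dotv (g i) (x j)
     + a j * dotv (g i) (x i) - k * (a j * dotv (g i) (g i)
     - 2 * (a j * dotv (g i) (g j)) + a j * dotv (g j) (g j)))); last first.
    move=> j _; rewrite !(dotvDl, dotvDr, dotvNl, dotvNr) (dotvC (g j) (g i)).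
    ring.
  rewrite !big_split /= !sumrN -!mulr_sumr !big_split /= !sumrN -!mulr_sumr.
  rewrite E1 E2 E3 -E4 -E5.
  by rewrite /A /B; ring.
rewrite SE in HS; rewrite ZE ccE.
clearbody X Gs A B.
set V := x i + nu - (X - s *: Gs).
have N0 : 0 <= L / 2 * dotv (V - s *: g i) (V - s *: g i).
  by apply: mulr_ge0; [apply: divr_ge0; [exact: ltW | exact: ler0n] | exact: dotv_ge0].
have ID : L / 2 * dotv V V + (A - k * B) - f i =
   (A - f i - (dotv (g i) X - dotv (g i) (x i))
   - k * (dotv (g i) (g i) - 2 * dotv (g i) Gs + B))
   + L / 2 * dotv (V - s *: g i) (V - s *: g i) + dotv (g i) nu.
  rewrite /V /k /s !(dotvDl, dotvDr, dotvNl, dotvNr, dotvZl, dotvZr).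
  rewrite ?(dotvC nu (x i)) ?(dotvC X (x i)) ?(dotvC Gs (x i)) ?(dotvC X nu).
  rewrite ?(dotvC Gs nu) ?(dotvC Gs X) ?(dotvC (x i) (g i)) ?(dotvC nu (g i)).
  rewrite ?(dotvC X (g i)) ?(dotvC Gs (g i)).
  by field; rewrite gt_eqF.
have := HS; lra.
Qed.

End WT.


Unset Implicit Arguments.

Theorem theorem1 (R : realType) (d : nat) (I : finType) (L : R)
  (x g : I -> 'rV[R]_d) (f : I -> R) (C : set 'rV[R]_d) :
  0 < L -> (0 < #|I|)%N ->
  closed C -> convex_setE C -> C 0 ->
  (convex_fun (W_T L x g f C) /\ C11 L (W_T L x g f C)) /\
  (forall i : I,
     is_proj C (- (L^-1 *: g i)) 0 ->
     (forall j : I, (2 * L)^-1 * enorm (g i - g j) ^+ 2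
                    <= f j - f i - dotv (g i) (x j - x i)) ->
     W_T L x g f C (x i) = f i /\ has_gradient (W_T L x g f C) (x i) (g i)).
Proof.
move=> L0 I0 _ Cconv C0.
have Hcvx : convex_fun (W_T L x g f C) by apply: W_convex.
have Hscv := W_scv x g f L0 I0 C0.
have HB := Gr_bound L0 Hcvx Hscv.
split.
  split => //; exists (Gr (W_T L x g f C)); split.
    by move=> y; apply: (G_grad L0 HB).
  by move=> y z; apply: (G_lip L0 HB).
move=> i Hp Hint.
have Wi : W_T L x g f C (x i) = f i.
  apply/eqP; rewrite eq_le; apply/andP; split; last exact: W_low.
  by have := W_up x g f L0 C0 i 0; rewrite addr0 dotv0r dotv0r mulr0 !addr0.
split => //.
set G := Gr (W_T L x g f C).
suff -> : g i = G (x i) by apply: (G_grad L0 HB).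
set v := G (x i) - g i.
have key : forall h, dotv v h <= L / 2 * dotv h h.
  move=> h; have /andP[B1 _] := HB (x i) h.
  have := W_up x g f L0 C0 i h.
  move: B1; rewrite Wi /v dotvBl; lra.
have := key (L^-1 *: v).
rewrite !(dotvZl, dotvZr).
have s0 : 0 < L^-1 by rewrite invr_gt0.
have Ls : L / 2 * (L^-1 * (L^-1 * dotv v v)) = L^-1 * dotv v v / 2.
  by field; rewrite gt_eqF.
rewrite Ls => H.
have nv0 := dotv_ge0 v.
have : L^-1 * dotv v v <= 0 by lra.
rewrite pmulr_rle0 // => nv.
have : dotv v v = 0 by apply/eqP; rewrite eq_le nv nv0.
move/dotv_eq0 => /eqP; rewrite subr_eq0 => /eqP ->.
by [].
Qed.
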